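(* If the extended Markov monoid of a probabilistic automaton $\mathcal{A}$ contains a leak witness, then the Markov monoid of $\mathcal{A}$ contains a non-simplicity witness.
   Context: Fix a finite alphabet $A$ and a probabilistic automaton $\mathcal{A}=(Q,q_0,\Delta,F)$, $\Delta:Q\times A\to\mathcal{D}(Q)$. A limit-word is a map $\mathbf{u}:Q\times Q\to\{0,1\}$ such that every $s$ has some $t$ with $\mathbf{u}(s,t)=1$. Concatenation: $(\mathbf{u}\cdot\mathbf{v})(s,t)=1$ iff there is $q$ with $\mathbf{u}(s,q)=\mathbf{v}(q,t)=1$ (written $\mathbf{u}\mathbf{v}$). $\mathbf{u}$ is idempotent if $\mathbf{u}\mathbf{u}=\mathbf{u}$; for idempotent $\mathbf{u}$, $s$ is $\mathbf{u}$-recurrent if for all $t$, $\mathbf{u}(s,t)=1\Rightarrow\mathbf{u}(t,s)=1$, and $\mathbf{u}$-transient otherwise; $\mathbf{u}^\sharp(s,t)=1$ iff $\mathbf{u}(s,t)=1$ and $t$ is $\mathbf{u}$-recurrent. For $a\in A$, $\mathbf{a}(s,t)=1$ iff $\Delta(s,a)(t)>0$; $\mathbf{1}$ is the identity. The Markov monoid of $\mathcal{A}$ is the smallest set of limit-words containing $\{\mathbf{a}\mid a\in A\}\cup\{\mathbf{1}\}$ and closed under concatenation and iteration of idempotents. An extended limit-word is a pair $(\mathbf{u},\mathbf{u}_+)$ of limit-words with $\mathbf{u}\le\mathbf{u}_+$ pointwise; concatenation is componentwise, $(\mathbf{u},\mathbf{u}_+)$ is idempotent if both components are, and then $(\mathbf{u},\mathbf{u}_+)^\sharp=(\mathbf{u}^\sharp,\mathbf{u}_+)$.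 The extended Markov monoid is the smallest set of extended limit-words containing $\{(\mathbf{a},\mathbf{a})\mid a\in A\}\cup\{(\mathbf{1},\mathbf{1})\}$ and closed under concatenation and iteration of idempotents. A leak witness is an idempotent extended limit-word $(\mathbf{u},\mathbf{u}_+)$ with states $r,q$ both $\mathbf{u}$-recurrent such that $\mathbf{u}(r,q)=0$ and $\mathbf{u}_+(r,q)=1$. A non-simplicity witness is a triple $(\mathbf{u},\mathbf{v},\mathbf{w})$ of elements of the Markov monoid, with $\mathbf{v}$ idempotent, for which there exist states $r,t$ such that: $\mathbf{u}\mathbf{v}^\sharp\mathbf{w}$ is idempotent, $r$ is $\mathbf{u}\mathbf{v}^\sharp\mathbf{w}$-recurrent, $(\mathbf{u}\mathbf{v})(r,t)=1$, and $t$ is $\mathbf{v}$-transient. *)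

(* Defs.v *)
From HB Require Import structures.
From mathcomp Require Import all_boot all_order all_algebra.
From mathcomp Require Import reals.
Set Implicit Arguments. Unset Strict Implicit. Unset Printing Implicit Defensive.
Import Order.TTheory GRing.Theory Num.Theory.
Local Open Scope ring_scope.

(* A probabilistic automaton (Q, q0, Delta, F): Delta s a is a probability
   distribution on Q, given by its mass function Delta s a : Q -> R. *)
Definition is_transition (R : realType) (Q A : finType) (Delta : Q -> A -> Q -> R) : Prop :=
  forall (s : Q) (a : A), (forall t, 0 <= Delta s a t) /\ \sum_(t : Q) Delta s a t = 1.

Definition lword (Q : finType) := {ffun Q * Q -> bool}.

Definition is_limit_word (Q : finType) (u : lword Q) : Prop :=
  forall s, exists t, u (s, t).

Definition lw_mul (Q : finType) (u v : lword Q) : lword Q :=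
  [ffun p : Q * Q => [exists q, u (p.1, q) && v (q, p.2)]].

Definition lw_one (Q : finType) : lword Q := [ffun p : Q * Q => p.1 == p.2].

Definition lw_idem (Q : finType) (u : lword Q) : bool := lw_mul u u == u.

Definition lw_recurrent (Q : finType) (u : lword Q) (s : Q) : bool :=
  [forall t, u (s, t) ==> u (t, s)].

Definition lw_sharp (Q : finType) (u : lword Q) : lword Q :=
  [ffun p : Q * Q => u p && lw_recurrent u p.2].

Definition lw_letter (R : realType) (Q A : finType) (Delta : Q -> A -> Q -> R) (a : A)
  : lword Q := [ffun p : Q * Q => 0 < Delta p.1 a p.2].

Inductive markov_monoid (R : realType) (Q A : finType) (Delta : Q -> A -> Q -> R)
  : lword Q -> Prop :=
| mm_letter (a : A) : markov_monoid Delta (lw_letter Delta a)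
| mm_one : markov_monoid Delta (@lw_one Q)
| mm_mul (u v : lword Q) :
    markov_monoid Delta u -> markov_monoid Delta v -> markov_monoid Delta (lw_mul u v)
| mm_sharp (u : lword Q) :
    markov_monoid Delta u -> lw_idem u -> markov_monoid Delta (lw_sharp u).

Inductive ext_markov_monoid (R : realType) (Q A : finType) (Delta : Q -> A -> Q -> R)
  : lword Q -> lword Q -> Prop :=
| emm_letter (a : A) : ext_markov_monoid Delta (lw_letter Delta a) (lw_letter Delta a)
| emm_one : ext_markov_monoid Delta (@lw_one Q) (@lw_one Q)
| emm_mul (u up v vp : lword Q) :
    ext_markov_monoid Delta u up -> ext_markov_monoid Delta v vp ->
    ext_markov_monoid Delta (lw_mul u v) (lw_mul up vp)
| emm_sharp (u up : lword Q) :
    ext_markov_monoid Delta u up -> lw_idem u -> lw_idem up ->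
    ext_markov_monoid Delta (lw_sharp u) up.

Definition leak_witness (Q : finType) (u up : lword Q) : Prop :=
  lw_idem u /\ lw_idem up /\
  exists r q : Q, [/\ lw_recurrent u r, lw_recurrent u q, u (r, q) = false & up (r, q) = true].

Definition non_simplicity_witness (Q : finType) (u v w : lword Q) : Prop :=
  lw_idem v /\
  exists r t : Q,
    let x := lw_mul (lw_mul u (lw_sharp v)) w in
    [/\ lw_idem x, lw_recurrent x r, lw_mul u v (r, t) = true & ~~ lw_recurrent v t].

(* Main.v *)
Require Import Defs.
From HB Require Import structures.
From mathcomp Require Import all_boot all_order all_algebra.
From mathcomp Require Import reals.

Section Aux.
Variable Q : finType.

Lemma lw_mulE (u v : lword Q) a b :
  lw_mul u v (a, b) = [exists q, u (a, q) && v (q, b)].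
Proof. by rewrite /lw_mul ffunE. Qed.

Lemma lw_mulA (u v w : lword Q) : lw_mul (lw_mul u v) w = lw_mul u (lw_mul v w).
Proof.
apply/ffunP=> [[a b]]; rewrite !lw_mulE.
apply/idP/idP=> /fintype.existsP[x /andP[h1 h2]].
- move: h1; rewrite lw_mulE=> /fintype.existsP[p /andP[h1 h3]].
  apply/fintype.existsP; exists p; rewrite h1 lw_mulE /=.
  by apply/fintype.existsP; exists x; rewrite h3 h2.
- move: h2; rewrite lw_mulE=> /fintype.existsP[p /andP[h2 h3]].
  apply/fintype.existsP; exists p; rewrite h3 andbT lw_mulE.
  by apply/fintype.existsP; exists x; rewrite h1 h2.
Qed.

Lemma lw_mul1l (u : lword Q) : lw_mul (@lw_one Q) u = u.
Proof.
apply/ffunP=> [[a b]]; rewrite lw_mulE.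
apply/fintype.existsP/idP=> [[q /andP[]]|h]; first by rewrite ffunE /= => /eqP ->.
by exists a; rewrite ffunE /= eqxx h.
Qed.

Lemma lw_mul1r (u : lword Q) : lw_mul u (@lw_one Q) = u.
Proof.
apply/ffunP=> [[a b]]; rewrite lw_mulE.
apply/fintype.existsP/idP=> [[q /andP[h]]|h]; first by rewrite ffunE /= => /eqP <-.
by exists b; rewrite ffunE /= eqxx h.
Qed.

Lemma lw_mul_sharp (v : lword Q) : lw_idem v -> lw_mul v (lw_sharp v) = lw_sharp v.
Proof.
move=> /eqP hv; apply/ffunP=> [[a b]]; rewrite lw_mulE ffunE /=.
rewrite -{3}hv lw_mulE.
apply/fintype.existsP/andP=> [[q /andP[h1]]|[/fintype.existsP[q /andP[h1 h2]] h3]].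
  rewrite ffunE /= => /andP[h2 h3]; split=> //; apply/fintype.existsP; exists q; by rewrite h1 h2.
by exists q; rewrite h1 ffunE /= h2 h3.
Qed.
End Aux.

Lemma emm_fst (R : realType) (Q A : finType) (Delta : Q -> A -> Q -> R) u up :
  ext_markov_monoid Delta u up -> markov_monoid Delta u.
Proof.
elim=> *; [exact: mm_letter|exact: mm_one|exact: mm_mul|exact: mm_sharp].
Qed.

Lemma key (R : realType) (Q A : finType) (Delta : Q -> A -> Q -> R) u up :
  ext_markov_monoid Delta u up -> forall a b, up (a, b) -> ~~ u (a, b) ->
  exists al v be t, [/\ markov_monoid Delta al, markov_monoid Delta v,
     markov_monoid Delta be, lw_idem v &
     [/\ u = lw_mul (lw_mul al (lw_sharp v)) be,
     lw_mul al v (a, t) & ~~ lw_recurrent v t]].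
Proof.
elim=> {u up}.
- by move=> x a b ->.
- by move=> a b ->.
- move=> u up v vp hu IHu hv IHv a b; rewrite !lw_mulE.
  move=> /fintype.existsP[c /andP[h1 h2]] hn.
  case hc: (u (a, c)).
  + have hvn : ~~ v (c, b).
      apply/negP=> h; move/negP: hn; apply; apply/fintype.existsP; exists c; by rewrite hc h.
    have [al [w [be [t [m1 m2 m3 i [e h t']]]]]] := IHv c b h2 hvn.
    exists (lw_mul u al), w, be, t; split=> //; first by apply: mm_mul=> //; exact: emm_fst hu.
    split=> //; first by rewrite e !lw_mulA.
    rewrite lw_mulA lw_mulE; apply/fintype.existsP; exists c; by rewrite hc h.
  + have [al [w [be [t [m1 m2 m3 i [e h t']]]]]] := IHu a c h1 (negbT hc).
    exists al, w, (lw_mul be v), t; split=> //; first by apply: mm_mul=> //; exact: emm_fst hv.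
    split=> //; by rewrite e !lw_mulA.
- move=> u up hu IH iu iup a b h; rewrite ffunE /= negb_and.
  case hb: (u (a, b)) => /= hn.
  + exists (@lw_one Q), u, (@lw_one Q), b; split=> //; [exact: mm_one|exact: emm_fst hu|exact: mm_one|].
    split=> //; [by rewrite lw_mul1l lw_mul1r|by rewrite lw_mul1l].
  + have [al [w [be [t [m1 m2 m3 i [e h' t']]]]]] := IH a b h (negbT hb).
    exists al, w, (lw_mul be (lw_sharp u)), t; split=> //.
      by apply: mm_mul=> //; apply: mm_sharp=> //; exact: emm_fst hu.
    split=> //; rewrite -!lw_mulA -e lw_mul_sharp //.
Qed.

Theorem proposition5p14 (R : realType) (Q A : finType) (q0 : Q) (F : {set Q})
  (Delta : Q -> A -> Q -> R) :
  is_transition Delta ->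
  (exists u up : lword Q, ext_markov_monoid Delta u up /\ leak_witness u up) ->
  exists u v w : lword Q,
    [/\ markov_monoid Delta u, markov_monoid Delta v, markov_monoid Delta w
      & non_simplicity_witness u v w].
Proof.
move=> _ [u [up [hu [iu [iup [r [q [rr rq urq uprq]]]]]]]].
have := @key R Q A Delta u up hu => /(_ r q); rewrite uprq urq => /(_ isT isT) [al [v [be [t [m1 m2 m3 i [e h t']]]]]].
exists al, v, be; split=> //; split=> //; exists r, t; split=> //; by rewrite -e.
Qed.
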